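(* Let $G$ be an interval graph and consider an instance of \textsc{Requirement Induced Disjoint Paths} on $G$. Suppose some vertex $u$ of $G$ represents three terminals belonging to three different terminal pairs, and for each of these three terminals, the vertex representing its partner (the other terminal of its pair) is at distance at least $2$ from $u$ in $G$. Then the instance is a no-instance.
   Context: All graphs are finite, undirected, without loops or multiple edges. For a path $P=v_1\cdots v_r$, the vertices $v_1,v_r$ are its ends and $v_2,\ldots,v_{r-1}$ its inner vertices. An edge $v_iv_j$ with $i+1<j$ is an inner chord of $P$ if $v_i$ or $v_j$ is an inner vertex of $P$. Distinct paths $P_1,\ldots,P_\ell$ are mutually induced if (i) no $P_i$ has an inner chord; (ii) two distinct paths $P_i,P_j$ share only vertices that are ends of both paths; (iii) no inner vertex $u$ of some $P_i$ is adjacent to a vertex $v$ of some $P_j$ with $j\neq i$, unless $v$ is an end of both $P_i$ and $P_j$. \textsc{Requirement Induced Disjoint Paths}: the input is a graph $G$, $k$ terminal pairs $(s_1,t_1),\ldots,(s_k,t_k)$ and positive integers $r_1,\ldots,r_k$. Each terminal is placed on (''represented by'') a vertex of $G$; several terminals may be represented by the same vertex, but $s_i$ and $t_i$ are represented by distinct vertices, and the unordered pairs of representing vertices are pairwise distinct for different $i$. The terminals $s_i$ and $t_i$ are called partners. The question is whether $G$ has $\ell=r_1+\cdots+r_k$ mutually induced paths such that, for each $i$, exactly $r_i$ of them join the vertex representing $s_i$ and the vertex representing $t_i$. An interval graph is a graph whose vertices can be assigned intervals of the real line so that two vertices are adjacent iff their intervals intersect. *)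

(* Defs.v *)
From Stdlib Require Import Reals.
From mathcomp Require Import all_boot.
Set Implicit Arguments. Unset Strict Implicit. Unset Printing Implicit Defensive.

Definition simple_graph (T : finType) (e : rel T) : Prop :=
  symmetric e /\ irreflexive e.

Definition interval_graph (T : finType) (e : rel T) : Prop :=
  exists (lft rgt : T -> R),
    (forall x, Rle (lft x) (rgt x)) /\
    (forall x y, x != y -> (e x y <-> (Rle (lft x) (rgt y) /\ Rle (lft y) (rgt x)))).

Definition is_gpath (T : finType) (e : rel T) (p : seq T) : Prop :=
  match p with
  | [::] => False
  | x :: q => path e x q /\ uniq p
  end.

Definition ends (T : eqType) (p : seq T) : seq T :=
  match p with
  | [::] => [::]
  | x :: q => [:: x; last x q]
  end.

Definition inner (T : eqType) (p : seq T) : seq T :=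
  drop 1 (take (size p).-1 p).

(* No inner chord: an edge v_i v_j with i+1 < j (indices 0-based here) is an
   inner chord if v_i or v_j is inner, i.e. unless i = 0 and j = r-1. *)
Definition no_inner_chord (T : finType) (e : rel T) (p : seq T) : Prop :=
  forall (x0 : T) (i j : nat), i.+1 < j -> j < size p ->
    e (nth x0 p i) (nth x0 p j) -> i = 0 /\ j = (size p).-1.

Definition induced_pair (T : finType) (e : rel T) (P P' : seq T) : Prop :=
  (forall v, v \in P -> v \in P' -> v \in ends P /\ v \in ends P') /\
  (forall u v, u \in inner P -> v \in P' -> e u v ->
     v \in ends P /\ v \in ends P').

Definition rid_solution (T : finType) (e : rel T) (k : nat)
    (s t : 'I_k -> T) (r : 'I_k -> nat) (Q : 'I_k -> seq (seq T)) : Prop :=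
  (forall i, size (Q i) = r i /\ uniq (Q i)) /\
  (forall i P, P \in Q i ->
     is_gpath e P /\ head (s i) P = s i /\ last (s i) P = t i /\
     no_inner_chord e P) /\
  (forall i j P P', P \in Q i -> P' \in Q j -> (i != j \/ P != P') ->
     induced_pair e P P').

Definition rid_instance (T : finType) (e : rel T) (k : nat)
    (s t : 'I_k -> T) (r : 'I_k -> nat) : Prop :=
  (forall i, 0 < r i) /\
  (forall i, s i != t i) /\
  (forall i j, i != j ->
     ~ ((s i = s j /\ t i = t j) \/ (s i = t j /\ t i = s j))).

(* u represents a terminal of pair i whose partner is at distance >= 2 from u
   (i.e. the partner is neither u nor a neighbour of u). *)
Definition far_terminal_at (T : finType) (e : rel T) (k : nat)
    (s t : 'I_k -> T) (u : T) (i : 'I_k) : Prop :=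
  (s i = u /\ t i != u /\ ~~ e u (t i)) \/
  (t i = u /\ s i != u /\ ~~ e u (s i)).

(* Main.v *)
Require Import Defs.
From Stdlib Require Import Reals Lra Lia.
From mathcomp Require Import all_boot zify.

Lemma edgeP (T : finType) (e : rel T) (P : seq T) d i :
  is_gpath e P -> i.+1 < size P -> e (nth d P i) (nth d P i.+1).
Proof.
case: P => [//|a q] [/(pathP d) H _] /= Hi.
by have := H i Hi.
Qed.

Lemma mem_innerP (T : finType) (P : seq T) d i :
  0 < i -> i < (size P).-1 -> nth d P i \in inner P.
Proof.
move=> H0 H1; rewrite /inner.
have -> : nth d P i = nth d (drop 1 (take (size P).-1 P)) i.-1.
  rewrite nth_drop nth_take; last by lia.
  by congr nth; rewrite -?subn1 in H1 *; lia.
apply: mem_nth; rewrite size_drop size_take; case: ifP => _; rewrite -?subn1 in H1 *; set n := size P in H1 *; lia.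
Qed.

Lemma notin_ends (T : finType) (P : seq T) d i :
  uniq P -> 0 < i -> i < (size P).-1 -> nth d P i \notin ends P.
Proof.
case: P => [//|a q] Hu H0 H1 /=; rewrite /= in H1.
rewrite !inE negb_or; apply/andP; split.
  have -> : a = nth d (a :: q) 0 by [].
  rewrite nth_uniq //= -?lt0n //; lia.
have -> : last a q = nth d (a :: q) (size q).
  rewrite (set_nth_default a d) //.
  by rewrite -[size q]/((size (a::q)).-1) nth_last.
rewrite nth_uniq //= -?lt0n //; lia.
Qed.

Lemma path_step (T : finType) (e : rel T) (P : seq T) u w d :
  simple_graph e -> is_gpath e P -> no_inner_chord e P ->
  ((head d P = u /\ last d P = w) \/ (head d P = w /\ last d P = u)) ->
  w != u -> ~~ e u w ->
  exists x y, x \in P /\ x \in inner P /\ x \notin ends P /\ e u x /\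
    e x y /\ y != u /\ ~~ e u y.
Proof.
move=> [esym eirr] Hp NC Hends wu euw.
have Hu : uniq P by case: P Hp {NC Hends} => [//|a q] [].
have hd : head d P = nth d P 0 by case: P Hp {NC Hends Hu}.
have hl : last d P = nth d P (size P).-1 by rewrite nth_last.
have [n Hn] : {n | size P = n} by exists (size P).
rewrite Hn in hl.
have Hn1 : 0 < n by rewrite -Hn; case: P Hp {NC Hends Hu hd hl Hn}.
have Hn3 : 2 < n.
  case: n Hn Hn1 hl => [//|[|[|n]]] Hn _ hl //.
  - move: Hends; rewrite hd hl /= => -[[Hx Hy]|[Hx Hy]]; by rewrite -Hx -Hy eqxx in wu.
  - have E := @edgeP _ _ _ d 0 Hp; rewrite Hn in E; have {}E := E isT.
    move: Hends; rewrite hd hl /= => -[[Hx Hy]|[Hx Hy]]; rewrite Hx Hy in E.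
    + by rewrite E in euw.
    + by rewrite esym E in euw.
case: n Hn Hn1 Hn3 hl => [|[|[|m]]] // Hn _ _ hl.
have Hs : forall j, j < m.+3 -> nth d P j \in P by move=> j Hj; apply: mem_nth; rewrite Hn.
move: Hends; rewrite hd hl /= => -[[Hx Hy]|[Hx Hy]].
- exists (nth d P 1), (nth d P 2); do !split.
  + exact: Hs.
  + by apply: mem_innerP; rewrite ?Hn.
  + by apply: notin_ends; rewrite ?Hn.
  + by rewrite -Hx; apply: edgeP; rewrite ?Hn.
  + by apply: edgeP; rewrite ?Hn.
  + by rewrite -Hx nth_uniq ?Hn.
  + apply/negP => E; rewrite -Hx in E.
    have := NC d 0 2 isT; rewrite Hn => /(_ isT E) [_ H2].
    have Em : m = 0 by move: H2 => /= H2; lia.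
    subst m.
    by move: euw; rewrite -Hx -Hy /= E.
- exists (nth d P m.+1), (nth d P m); do !split.
  + exact: Hs.
  + by apply: mem_innerP; rewrite ?Hn.
  + by apply: notin_ends; rewrite ?Hn.
  + by rewrite -Hy esym; apply: edgeP; rewrite ?Hn.
  + by rewrite esym; apply: edgeP; rewrite ?Hn.
  + by rewrite -Hy nth_uniq ?Hn //=; lia.
  + apply/negP => E; rewrite -Hy esym in E.
    have := NC d m m.+2 (leqnn _); rewrite Hn => /(_ (leqnn _) E) [H0 _].
    have Em : m = 0 by lia.
    subst m.
    by move: euw; rewrite -Hx -Hy /= esym E.
Qed.

Lemma middle (lu ru la ra lb rb lc rc : R) :
  Rle la ra -> Rle lb rb -> Rle lc rc ->
  Rle lu ra -> Rle la ru -> Rle lu rb -> Rle lb ru -> Rle lu rc -> Rle lc ru ->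
  (Rlt ra lb \/ Rlt rb la) -> (Rlt ra lc \/ Rlt rc la) -> (Rlt rb lc \/ Rlt rc lb) ->
  (Rle lu la /\ Rle ra ru) \/ (Rle lu lb /\ Rle rb ru) \/ (Rle lu lc /\ Rle rc ru).
Proof.
intros; destruct H8; destruct H9; destruct H10;
  first [ left; split; lra | right; left; split; lra | right; right; split; lra | lra ].
Qed.

Lemma disj (T : finType) (e : rel T) lft rgt x y :
  (forall x y, x != y -> (e x y <-> (Rle (lft x) (rgt y) /\ Rle (lft y) (rgt x)))) ->
  x != y -> ~~ e x y -> Rlt (rgt x) (lft y) \/ Rlt (rgt y) (lft x).
Proof.
move=> Hi Hxy Ne.
destruct (Rlt_le_dec (rgt x) (lft y)) as [H|H]; first by left.
destruct (Rlt_le_dec (rgt y) (lft x)) as [H'|H']; first by right.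
exfalso; move/negP: Ne; apply; apply/(Hi _ _ Hxy); split => //.
Qed.

Theorem mainTheorem6 (T : finType) (e : rel T) (k : nat)
    (s t : 'I_k -> T) (r : 'I_k -> nat) (u : T) (i1 i2 i3 : 'I_k) :
  simple_graph e ->
  interval_graph e ->
  rid_instance e s t r ->
  i1 != i2 -> i1 != i3 -> i2 != i3 ->
  far_terminal_at e s t u i1 ->
  far_terminal_at e s t u i2 ->
  far_terminal_at e s t u i3 ->
  ~ exists Q : 'I_k -> seq (seq T), rid_solution e s t r Q.
Proof.
move=> Hg [lft [rgt [Hlr Hint]]] [Hr _] n12 n13 n23 F1 F2 F3 [Q [HQs [HQp HQi]]].
have [esym eirr] := Hg.
have getP : forall j, far_terminal_at e s t u j -> exists P, P \in Q j /\
    exists x y, x \in P /\ x \in inner P /\ x \notin ends P /\ e u x /\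
    e x y /\ y != u /\ ~~ e u y.
  move=> j Fj; have [Hs _] := HQs j.
  have HP : nth [::] (Q j) 0 \in Q j by apply: mem_nth; rewrite Hs Hr.
  exists (nth [::] (Q j) 0); split => //.
  have [Hp [Hh [Hl NC]]] := HQp j _ HP.
  case: Fj => [[su [tu eut]]|[tu [su eus]]].
  - apply: (@path_step _ _ _ u (t j) (s j)) => //; left; split => //; by rewrite Hh.
  - apply: (@path_step _ _ _ u (s j) (s j)) => //; right; split => //.
    by rewrite Hl.
have sep : forall j j' P P' x x', j != j' -> P \in Q j -> P' \in Q j' ->
    x \in P -> x \in inner P -> x \notin ends P -> x' \in P' -> x' \notin ends P' ->
    x != x' /\ ~~ e x x'.
  move=> j j' P P' x x' njj HP HP' Hx Hxi Hxe Hx' Hxe'.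
  have [H1 H2] := HQi j j' P P' HP HP' (or_introl njj).
  split.
  - apply/negP => /eqP E; subst x'.
    by have [] := H1 x Hx Hx'; rewrite (negbTE Hxe).
  - apply/negP => E.
    by have [] := H2 x x' Hxi Hx' E; rewrite (negbTE Hxe').
have [P1 [HP1 [x1 [y1 [Hx1 [Hi1 [He1 [ux1 [xy1 [yu1 uy1]]]]]]]]]] := getP _ F1.
have [P2 [HP2 [x2 [y2 [Hx2 [Hi2 [He2 [ux2 [xy2 [yu2 uy2]]]]]]]]]] := getP _ F2.
have [P3 [HP3 [x3 [y3 [Hx3 [Hi3 [He3 [ux3 [xy3 [yu3 uy3]]]]]]]]]] := getP _ F3.
have [d12 e12] := sep _ _ _ _ _ _ n12 HP1 HP2 Hx1 Hi1 He1 Hx2 He2.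
have [d13 e13] := sep _ _ _ _ _ _ n13 HP1 HP3 Hx1 Hi1 He1 Hx3 He3.
have [d23 e23] := sep _ _ _ _ _ _ n23 HP2 HP3 Hx2 Hi2 He2 Hx3 He3.
have meet : forall x, e u x -> Rle (lft u) (rgt x) /\ Rle (lft x) (rgt u).
  move=> x ux; apply/(Hint _ _ _) => //; apply/negP => /eqP E; subst x.
  by rewrite eirr in ux.
have fin : forall x y, e u x -> e x y -> y != u -> ~~ e u y ->
    Rle (lft u) (lft x) -> Rle (rgt x) (rgt u) -> False.
  move=> x y ux xy yu uy L1 L2.
  have xy' : x != y by apply/negP => /eqP E; subst y; rewrite eirr in xy.
  have [A B] := (Hint _ _ xy').1 xy.
  move/negP: uy; apply; apply/(Hint _ _ _); first by rewrite eq_sym.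
  split; lra.
have [a1 b1] := meet _ ux1.
have [a2 b2] := meet _ ux2.
have [a3 b3] := meet _ ux3.
have := @middle _ _ _ _ _ _ _ _ (Hlr x1) (Hlr x2) (Hlr x3) a1 b1 a2 b2 a3 b3
  (@disj _ _ _ _ _ _ Hint d12 e12) (@disj _ _ _ _ _ _ Hint d13 e13) (@disj _ _ _ _ _ _ Hint d23 e23).
case=> [[L1 L2]|[[L1 L2]|[L1 L2]]].
- exact: (fin _ _ ux1 xy1 yu1 uy1 L1 L2).
- exact: (fin _ _ ux2 xy2 yu2 uy2 L1 L2).
- exact: (fin _ _ ux3 xy3 yu3 uy3 L1 L2).
Qed.
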